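(* Let $(a_n)_{n\ge0}$ be a sequence of real numbers such that for every $C_1>1$ there exists $C_0\ge0$ such that for every $q\ge2$ and all integers $m_1,\dots,m_q\ge0$, $$a_{m_1+\cdots+m_q}\le C_1\sum_{i=1}^q a_{m_i}+qC_0.$$ Then $\liminf_{n\to+\infty}\frac1n a_n=\limsup_{n\to+\infty}\frac1n a_n$. *)

(* Defs.v *)
From HB Require Import structures.
From mathcomp Require Import all_boot all_order all_algebra.
From mathcomp Require Import all_classical all_reals all_analysis.

(* Main.v *)
Require Import Defs.
From HB Require Import structures.
From mathcomp Require Import all_boot all_order all_algebra.
From mathcomp Require Import all_classical all_reals all_analysis.
From mathcomp Require Import ring lra.
Import Order.TTheory GRing.Theory Num.Theory.
Local Open Scope ring_scope.

Lemma split_bound (R : realType) (a : nat -> R) (C1 C0 : R) :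
  0 <= C1 ->
  (forall (q : nat) (m : 'I_q -> nat), (2 <= q)%N ->
       a (\sum_(i < q) m i)%N <= C1 * \sum_(i < q) a (m i) + q%:R * C0) ->
  forall n, (0 < n)%N -> forall d : R, 0 < d ->
  exists M, forall m, (M <= m)%N -> a m / m%:R <= (C1 * a n + C0) / n%:R + d.
Proof.
move=> C1ge0 H n n0 d d0.
set S : R := \sum_(r < n) `|a r|.
set X := C1 * a n + C0.
set B := C1 * S + C0 + `|X|.
exists (maxn n (Num.truncn (B / d)).+1) => m.
rewrite geq_max => /andP[nm Bm].
set k := (m %/ n)%N. set r := (m %% n)%N.
have k1 : (0 < k)%N by rewrite divn_gt0.
have rn : (r < n)%N by rewrite ltn_mod.
have mE : m = (k * n + r)%N by rewrite /k /r -divn_eq.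
pose f := fun i : 'I_k.+1 => if (i < k)%N then n else r.
have := H k.+1 f; rewrite ltnS k1 => /(_ isT).
have fmax : f ord_max = r by rewrite /f /= ltnn.
rewrite !big_ord_recr /= fmax.
have -> : (\sum_(i < k) f (widen_ord (leqnSn k) i) = k * n)%N.
  rewrite (eq_bigr (fun _ => n)); last by move=> i _; rewrite /f /= ltn_ord.
  by rewrite sum_nat_const card_ord.
have -> : \sum_(i < k) a (f (widen_ord (leqnSn k) i)) = k%:R * a n.
  rewrite (eq_bigr (fun _ => a n)); last by move=> i _; rewrite /f /= ltn_ord.
  by rewrite sumr_const card_ord mulr_natl.
rewrite -mE => Ham.
have aS : a r <= S.
  apply: le_trans (ler_norm _) _.
  rewrite /S (bigD1 (Ordinal rn)) //= lerDl sumr_ge0 // => i _.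
have S0 : 0 <= S by rewrite sumr_ge0.
have n0' : 0 < n%:R :> R by rewrite ltr0n.
have m0 : 0 < m%:R :> R by rewrite ltr0n (leq_trans n0).
have rn0 : 0 <= r%:R / n%:R :> R by rewrite divr_ge0 ?ler0n.
have rn1 : r%:R / n%:R <= 1 :> R by rewrite ler_pdivrMr // mul1r ler_nat ltnW.
have key : a m <= m%:R * X / n%:R + B.
  have E : m%:R * X / n%:R = k%:R * X + r%:R / n%:R * X.
    rewrite mE natrD natrM; field; by rewrite gt_eqF.
  rewrite E.
  have h1 : - (r%:R / n%:R * X) <= `|X|.
    apply: le_trans (ler_norm _) _; rewrite normrN normrM ger0_norm //.
    by rewrite ler_piMl.
  have h2 : C1 * a r <= C1 * S by rewrite ler_wpM2l.
  move: Ham; rewrite -addn1 natrD => Ham.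
  apply: le_trans Ham _.
  have -> : C1 * (k%:R * a n + a r) + (k%:R + 1) * C0 = k%:R * X + (C1 * a r + C0) by rewrite /X; ring.
  rewrite -addrA lerD2l /B.
  move: (r%:R / n%:R * X) h1 => t h1; move: (C1 * a r) (C1 * S) h2 => u v h2.
  lra.
have Bd : B / m%:R <= d.
  rewrite ler_pdivrMr // -ler_pdivrMl // mulrC.
  apply: ltW; apply: lt_le_trans (truncnS_gt _) _; rewrite ler_nat //.
apply: (@le_trans _ _ ((m%:R * X / n%:R + B) / m%:R)).
  by rewrite ler_wpM2r // invr_ge0 ltW.
have -> : (m%:R * X / n%:R + B) / m%:R = X / n%:R + B / m%:R.
  by field; rewrite !gt_eqF.
by rewrite lerD2l.
Qed.

Lemma esup_le_ev (R : realType) (u : nat -> \bar R) (M : nat) (x : \bar R) :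
  (forall m, (M <= m)%N -> (u m <= x)%E) -> (limn_esup u <= x)%E.
Proof.
move=> H; rewrite limn_esup_lim.
have -> : limn (esups u) = ereal_inf (range (esups u)).
  by apply/cvg_lim => //; exact: cvg_esups_inf.
apply: le_trans (ereal_inf_lbound _) _; first by exists M.
by apply: ge_ereal_sup => _ [m /= Mm <-]; exact: H.
Qed.

Lemma einf_lt_freq (R : realType) (u : nat -> \bar R) (x : \bar R) :
  (limn_einf u < x)%E -> forall N, exists2 n, (N <= n)%N & (u n < x)%E.
Proof.
rewrite limn_einf_lim.
have -> : limn (einfs u) = ereal_sup (range (einfs u)).
  by apply/cvg_lim => //; exact: cvg_einfs_sup.
move=> h N.
have : (einfs u N < x)%E.
  by apply: le_lt_trans h; apply: ereal_sup_ubound; exists N.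
by move=> /ereal_inf_lt [_ [n /= Nn <-]] ?; exists n.
Qed.

Lemma core (R : realType) (a : nat -> R) :
  (forall C1 : R, 1 < C1 -> exists C0 : R, 0 <= C0 /\
     forall (q : nat) (m : 'I_q -> nat), (2 <= q)%N ->
       a (\sum_(i < q) m i)%N <= C1 * \sum_(i < q) a (m i) + q%:R * C0) ->
  forall t eps : R, (limn_einf (fun n : nat => ((a n) / n%:R)%:E) < t%:E)%E ->
  0 < eps ->
  (limn_esup (fun n : nat => ((a n) / n%:R)%:E) <= (t + eps)%:E)%E.
Proof.
move=> Hyp t eps lt e0.
have t1 : 0 < `|t| + 1 by rewrite ltr_pwDr // normr_ge0.
have d0 : 0 < eps / (3 * (`|t| + 1)) by rewrite divr_gt0 // mulr_gt0.
have C1gt : 1 < 1 + eps / (3 * (`|t| + 1)) by rewrite ltrDl.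
have [C0 [C00 HC]] := Hyp _ C1gt.
set C1 := 1 + eps / (3 * (`|t| + 1)) in HC.
pose N := (Num.truncn (3 * C0 / eps)).+1.
have [n Nn unt] := @einf_lt_freq _ _ _ lt N.
have n0 : (0 < n)%N by apply: leq_trans Nn.
have n0' : 0 < n%:R :> R by rewrite ltr0n.
have e3 : 0 < eps / 3 by rewrite divr_gt0.
have [M HM] := @split_bound _ _ _ _ (ltW (lt_trans ltr01 C1gt)) HC n n0 _ e3.
apply: (@esup_le_ev _ _ M) => m Mm; rewrite lee_fin.
apply: le_trans (HM m Mm) _.
move: unt; rewrite lte_fin => vt.
have h1 : C1 * (a n / n%:R) <= C1 * t.
  by rewrite ler_wpM2l // ?ltW // /C1 addr_gt0.
have q : t / (3 * (`|t| + 1)) <= 1 / 3.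
  rewrite ler_pdivrMr ?mulr_gt0 //; have := ler_norm t; lra.
have h2 : C1 * t <= t + eps / 3.
  have -> : C1 * t = t + eps * (t / (3 * (`|t| + 1))).
    by rewrite /C1; field; rewrite gt_eqF.
  rewrite lerD2l; have := ler_wpM2l (ltW e0) q; lra.
have h3 : C0 / n%:R <= eps / 3.
  rewrite ler_pdivrMr //.
  have : 3 * C0 / eps < n%:R.
    apply: lt_le_trans (truncnS_gt _) _; rewrite ler_nat //.
  rewrite ltr_pdivrMr // => h; lra.
have -> : (C1 * a n + C0) / n%:R = C1 * (a n / n%:R) + C0 / n%:R.
  by rewrite mulrDl mulrA.
lra.
Qed.

Theorem lemma7 (R : realType) (a : nat -> R) :
  (forall C1 : R, 1 < C1 -> exists C0 : R, 0 <= C0 /\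
     forall (q : nat) (m : 'I_q -> nat), (2 <= q)%N ->
       a (\sum_(i < q) m i)%N <= C1 * \sum_(i < q) a (m i) + q%:R * C0) ->
  limn_einf (fun n : nat => ((a n) / n%:R)%:E) =
  limn_esup (fun n : nat => ((a n) / n%:R)%:E).
Proof.
move=> Hyp; apply/eqP; rewrite eq_le limn_einf_sup /=.
have C := @core _ _ Hyp.
case E: (limn_einf _) => [l| |].
- apply/lee_addgt0Pr => e e0; rewrite -EFinD.
  have -> : l + e = (l + e / 2) + e / 2 by field.
  apply: C; last by rewrite divr_gt0.
  by rewrite E lte_fin; rewrite ltrDl divr_gt0.
- by rewrite leey.
- case F: (limn_esup _) => [s| |] //.
  + have := C (s - 2) 1; rewrite E F => /(_ (ltNyr _) ltr01).
    rewrite lee_fin => h; exfalso; move: h; clear; move=> h; lra.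
  + by have := C 0 1; rewrite E F => /(_ (ltNyr _) ltr01).
Qed.
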